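(* Let $(\mathcal A,\jmath)_K$ be a $\mathrm{C}^*$-net bundle over a pathwise connected poset $K$ and fix $o\in K$. The set of states of $(\mathcal A,\jmath)_K$ is in one-to-one correspondence with the set of $\pi_1^o(K)$-invariant states of the holonomy dynamical system $(\mathcal A_o,\pi_1^o(K),\jmath_* )$.
   Context: Poset homotopy: $0$-simplices are elements of $K$; an $n$-simplex $x$ ($n\ge1$) consists of $(n-1)$-simplices $\partial_0x,\dots,\partial_nx$ and a support $|x|\in K$ with $|\partial_ix|\le|x|$. Paths are concatenations $b_n*\cdots*b_1$ with $\partial_0b_i=\partial_1b_{i+1}$; homotopy is generated by replacing consecutive $\partial_0c*\partial_2c$ by $\partial_1c$ or conversely; $\pi_1^o(K)$ is the group of homotopy classes of loops at $o$. A $\mathrm{C}^*$-net bundle: unital $\mathrm{C}^*$-algebras $\mathcal A_a$ and ${}^*$-isomorphisms $\jmath_{ea}:\mathcal A_a\to\mathcal A_e$ ($a\le e$) with $\jmath_{ea}\circ\jmath_{ad}=\jmath_{ed}$; $\jmath_{ae}:=\jmath_{ea}^{-1}$. Holonomy: $\jmath_b:=\jmath_{\partial_0b\,|b|}\circ\jmath_{|b|\,\partial_1b}$ for a $1$-simplex $b$, $\jmath_p:=\jmath_{b_n}\circ\cdots\circ\jmath_{b_1}$ for a path; $\jmath_p$ is homotopy invariant and $\jmath_{*,[p]}:=\jmath_p$ defines an action of $\pi_1^o(K)$ on $\mathcal A_o$. A state of the net bundle is a family of states $\omega_a$ of $\mathcal A_a$ with $\omega_a=\omega_e\circ\jmath_{ea}$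 for $a\le e$; an invariant state of the dynamical system is a state $\varphi$ of $\mathcal A_o$ with $\varphi\circ\jmath_{*,[p]}=\varphi$ for all $[p]$. *)

(* Defs.v *)
From HB Require Import structures.
From mathcomp Require Import all_boot all_order all_algebra.
From mathcomp Require Import reals.
From mathcomp Require Import complex.
Set Implicit Arguments. Unset Strict Implicit. Unset Printing Implicit Defensive.
Import Order.TTheory GRing.Theory Num.Theory.
Local Open Scope ring_scope.

Record CStarAlgebra (R : realType) := {
  cs_alg :> algType R[i];
  cs_star : cs_alg -> cs_alg;
  cs_norm : cs_alg -> R;
  cs_starD : forall x y, cs_star (x + y) = cs_star x + cs_star y;
  cs_starZ : forall (c : R[i]) x, cs_star (c *: x) = (Num.conj c) *: cs_star x;
  cs_starM : forall x y, cs_star (x * y) = cs_star y * cs_star x;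
  cs_starK : forall x, cs_star (cs_star x) = x;
  cs_norm_ge0 : forall x, 0 <= cs_norm x;
  cs_norm_eq0 : forall x, cs_norm x = 0 -> x = 0;
  cs_normD : forall x y, cs_norm (x + y) <= cs_norm x + cs_norm y;
  cs_normZ : forall (c : R[i]) x, ((cs_norm (c *: x))%:C)%C = `|c| * ((cs_norm x)%:C)%C;
  cs_normM : forall x y, cs_norm (x * y) <= cs_norm x * cs_norm y;
  cs_normC : forall x, cs_norm (cs_star x * x) = cs_norm x ^+ 2;
  cs_complete : forall u : nat -> cs_alg,
    (forall eps : R, 0 < eps -> exists N, forall m n, (N <= m)%N -> (N <= n)%N ->
        cs_norm (u m - u n) < eps) ->
    exists l, forall eps : R, 0 < eps -> exists N, forall n, (N <= n)%N ->
        cs_norm (u n - l) < eps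
}.

Definition is_state (R : realType) (A : CStarAlgebra R) (phi : A -> R[i]) : Prop :=
  (forall (c : R[i]) (x y : A), phi (c *: x + y) = c * phi x + phi y) /\
  (forall x : A, 0 <= phi (cs_star x * x)) /\
  phi 1 = 1.

Definition is_star_iso (R : realType) (A B : CStarAlgebra R)
    (f : A -> B) (g : B -> A) : Prop :=
  [/\ (forall (c : R[i]) (x y : A), f (c *: x + y) = c *: f x + f y),
      (forall x y : A, f (x * y) = f x * f y),
      f 1 = 1,
      (forall x : A, f (cs_star x) = cs_star (f x))
    & (cancel f g /\ cancel g f)].

Section Poset.
Context {disp : Order.disp_t} {K : porderType disp}.

Record simplex1 := Simplex1 {
  bd0 : K; bd1 : K; supp1 : K;
  bd0_le : (bd0 <= supp1)%O;
  bd1_le : (bd1 <= supp1)%O }.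

(* A path b_n * ... * b_1 from a to e is the list [:: b_1; ...; b_n] with
   bd1 b_1 = a, bd0 b_i = bd1 b_(i+1), bd0 b_n = e; the empty list is the
   trivial path at a (a = e). *)
Fixpoint is_path (a e : K) (p : seq simplex1) : Prop :=
  match p with
  | [::] => a = e
  | b :: q => bd1 b = a /\ is_path (bd0 b) e q
  end.

Definition pathwise_connected : Prop :=
  forall a e : K, exists p, is_path a e p.

End Poset.
Arguments simplex1 {disp} K.

Record netBundle (R : realType) {disp : Order.disp_t} (K : porderType disp) := {
  nb_alg : K -> CStarAlgebra R;
  (* jmath_{ea} : A_a -> A_e for a <= e, with its inverse jmath_{ae} *)
  nb_j : forall a e : K, (a <= e)%O -> nb_alg a -> nb_alg e;
  nb_jinv : forall a e : K, (a <= e)%O -> nb_alg e -> nb_alg a;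
  nb_iso : forall a e (h : (a <= e)%O), is_star_iso (nb_j h) (nb_jinv h);
  nb_comp : forall a d e (had : (d <= a)%O) (hae : (a <= e)%O) (hde : (d <= e)%O),
      forall x, nb_j hae (nb_j had x) = nb_j hde x
}.

Arguments nb_alg {R disp K} n _.
Arguments nb_j {R disp K} n {a e} _ _.
Arguments nb_jinv {R disp K} n {a e} _ _.

Section Holonomy.
Context (R : realType) {disp : Order.disp_t} {K : porderType disp}
        (N : netBundle R K).
Local Notation A := (nb_alg N).

Definition hol1 (b : simplex1 K) : A (bd1 b) -> A (bd0 b) :=
  fun x => nb_jinv N (bd0_le b) (nb_j N (bd1_le b) x).

(* hol_rel a e p x y : p is a path from a to e and y = jmath_p x. *)
Inductive hol_rel : forall a e : K, seq (simplex1 K) -> A a -> A e -> Prop :=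
| hol_nil (a : K) (x : A a) : @hol_rel a a [::] x x
| hol_cons (b : simplex1 K) (e : K) (p : seq (simplex1 K)) (x : A (bd1 b)) (y : A e) :
    @hol_rel (bd0 b) e p (@hol1 b x) y -> @hol_rel (bd1 b) e (b :: p) x y.

Definition is_bundle_state (om : forall a : K, A a -> R[i]) : Prop :=
  (forall a, is_state (om a)) /\
  (forall a e (h : (a <= e)%O) (x : A a), om a x = om e (nb_j N h x)).

(* pi_1^o(K)-invariant states of the holonomy dynamical system on A_o:
   phi o jmath_p = phi for every loop p at o. *)
Definition is_invariant_state (o : K) (phi : A o -> R[i]) : Prop :=
  is_state phi /\
  (forall (p : seq (simplex1 K)) (x y : A o), hol_rel p x y -> phi y = phi x).

End Holonomy.

Arguments pathwise_connected {disp} K.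
Arguments is_bundle_state {R disp K} N om.
Arguments is_invariant_state {R disp K} N o phi.

(* Main.v *)
Require Import Defs.
From HB Require Import structures.
From mathcomp Require Import all_boot all_order all_algebra.
From mathcomp Require Import reals complex.
From Stdlib Require Import ClassicalEpsilon.
Import Order.TTheory GRing.Theory Num.Theory.
Local Open Scope ring_scope.

Section Helpers.
Set Implicit Arguments. Unset Strict Implicit.
Variables (R : realType) (A B : CStarAlgebra R) (f : A -> B) (g : B -> A).
Hypothesis H : is_star_iso f g.

Lemma iso_inv_lin c x y : g (c *: x + y) = c *: g x + g y.
Proof.
case: H => fl _ _ _ [fK gK].
by rewrite -{1}(gK x) -{1}(gK y) -fl fK.
Qed.
Lemma iso_inv_mul x y : g (x * y) = g x * g y.
Proof.
case: H => _ fm _ _ [fK gK].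
by rewrite -{1}(gK x) -{1}(gK y) -fm fK.
Qed.
Lemma iso_inv_one : g 1 = 1.
Proof. case: H => _ _ f1 _ [fK gK]. by rewrite -f1 fK. Qed.
Lemma iso_inv_star x : g (cs_star x) = cs_star (g x).
Proof. case: H => _ _ _ fs [fK gK]. by rewrite -{1}(gK x) -fs fK. Qed.
End Helpers.

Section Main.
Set Implicit Arguments. Unset Strict Implicit.
Context (R : realType) {disp : Order.disp_t} {K : porderType disp}
        (N : netBundle R K).
Local Notation A := (nb_alg N).
Local Notation h1 b := (@hol1 R disp K N b).

Lemma hol_inv a e q (x : A a) (y : A e) : hol_rel q x y ->
  match q with
  | [::] => forall Hae : a = e, y = eq_rect a A x e Hae
  | b :: p => forall Hb : a = bd1 b,
      hol_rel p (h1 b (eq_rect a A x (bd1 b) Hb)) y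
  end.
Proof.
case=> [a' x' | b e' p x' y' Hr] Hq.
  by rewrite (eq_irrelevance Hq erefl).
by rewrite (eq_irrelevance Hq erefl).
Qed.

Lemma hol_gen (F : forall a, A a -> A a -> A a)
  (HF : forall b x x', h1 b (F _ x x') = F _ (h1 b x) (h1 b x')) :
  forall a e p (x : A a) (y : A e), hol_rel p x y ->
  forall x' y', hol_rel p x' y' -> hol_rel p (F _ x x') (F _ y y').
Proof.
move=> a e p x y; elim=> [a0 x0 | b e0 p0 x0 y0 Hr IH] x' y' H2.
  have := hol_inv H2 erefl => /= ->; exact: hol_nil.
have := hol_inv H2 erefl => /= H3.
apply: hol_cons; rewrite HF; exact: IH.
Qed.

Lemma hol_exists a e p : is_path a e p -> forall x : A a, exists y : A e, hol_rel p x y.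
Proof.
elim: p a => [|b p IH] a /=.
  by move=> -> x; exists x; exact: hol_nil.
move=> [<- Hp] x; have [y Hy] := IH _ Hp (h1 b x); exists y; exact: hol_cons.
Qed.

Lemma hol_app a e p (x : A a) (y : A e) : hol_rel p x y ->
  forall f q (z : A f), hol_rel q y z -> hol_rel (p ++ q) x z.
Proof.
elim=> [//| b e0 p0 x0 y0 Hr IH] f q z Hq /=.
apply: hol_cons; exact: IH.
Qed.

Definition revs (b : simplex1 K) : simplex1 K :=
  @Simplex1 _ _ (bd1 b) (bd0 b) (supp1 b) (bd1_le b) (bd0_le b).

Lemma hol1_revs b (x : A (bd1 b)) : h1 (revs b) (h1 b x) = x.
Proof.
rewrite /hol1 /=.
have [_ _ _ _ [fK gK]] := nb_iso N (bd0_le b).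
have [_ _ _ _ [fK' gK']] := nb_iso N (bd1_le b).
by rewrite gK fK'.
Qed.

Lemma hol_rev a e p (x : A a) (y : A e) : hol_rel p x y ->
  hol_rel (rev (map revs p)) y x.
Proof.
elim=> [a0 x0 | b e0 p0 x0 y0 Hr IH]; first exact: hol_nil.
rewrite map_cons rev_cons -cats1.
apply: (hol_app IH).
apply: (@hol_cons _ _ _ N (revs b)).
rewrite hol1_revs; exact: hol_nil.
Qed.

Lemma hol1_lin b c (x y : A (bd1 b)) : h1 b (c *: x + y) = c *: h1 b x + h1 b y.
Proof.
rewrite /hol1.
have [fl _ _ _ _] := nb_iso N (bd1_le b).
by rewrite fl (iso_inv_lin (nb_iso N (bd0_le b))).
Qed.
Lemma hol1_mul b (x y : A (bd1 b)) : h1 b (x * y) = h1 b x * h1 b y.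
Proof.
rewrite /hol1.
have [_ fm _ _ _] := nb_iso N (bd1_le b).
by rewrite fm (iso_inv_mul (nb_iso N (bd0_le b))).
Qed.
Lemma hol1_one b : h1 b 1 = 1.
Proof.
rewrite /hol1.
have [_ _ f1 _ _] := nb_iso N (bd1_le b).
by rewrite f1 (iso_inv_one (nb_iso N (bd0_le b))).
Qed.
Lemma hol1_star b (x : A (bd1 b)) : h1 b (cs_star x) = cs_star (h1 b x).
Proof.
rewrite /hol1.
have [_ _ _ fs _] := nb_iso N (bd1_le b).
by rewrite fs (iso_inv_star (nb_iso N (bd0_le b))).
Qed.

Lemma bundle_hol om : is_bundle_state N om ->
  forall a e p (x : A a) (y : A e), hol_rel p x y -> om e y = om a x.
Proof.
move=> [_ Hc] a e p x y; elim=> [//| b e0 p0 x0 y0 Hr IH].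
rewrite IH /hol1.
have [_ _ _ _ [fK gK]] := nb_iso N (bd0_le b).
by rewrite (Hc _ _ (bd0_le b)) gK -Hc.
Qed.

End Main.

Theorem lemma4p1 (R : realType) (disp : Order.disp_t) (K : porderType disp)
    (N : netBundle R K) (o : K) (Kconn : pathwise_connected K) :
  (forall om : forall a : K, nb_alg N a -> R[i],
      is_bundle_state N om -> is_invariant_state N o (om o)) /\
  (forall phi : nb_alg N o -> R[i],
      is_invariant_state N o phi ->
      exists om : forall a : K, nb_alg N a -> R[i],
        is_bundle_state N om /\ forall x, om o x = phi x) /\
  (forall om om' : forall a : K, nb_alg N a -> R[i],
      is_bundle_state N om -> is_bundle_state N om' ->
      (forall x, om o x = om' o x) -> forall a x, om a x = om' a x).
Proof.
split.
  move=> om Hom; split; first by case: Hom.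
  move=> p x y Hp; exact: (bundle_hol Hom Hp).
split; last first.
  move=> om om' H1 H2 Ho a x.
  have [p Hp] := Kconn a o.
  have [y Hy] := hol_exists Hp x.
  by rewrite -(bundle_hol H1 Hy) -(bundle_hol H2 Hy).
move=> phi [[Hl [Hpos H1]] Hinv].
have ex : forall a (x : nb_alg N a), exists y : nb_alg N o, exists p, hol_rel p x y.
  move=> a x; have [p Hp] := Kconn a o.
  by have [y Hy] := hol_exists Hp x; exists y, p.
have wd : forall a p q (x : nb_alg N a) y y', hol_rel p x y -> hol_rel q x y' -> phi y = phi y'.
  move=> a p q x y y' Hp Hq.
  pose proof (hol_app (hol_rev Hq) Hp) as Hl0. exact: (Hinv _ _ _ Hl0).
pose om a x := phi (proj1_sig (constructive_indefinite_description _ (ex a x))).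
have omE : forall a p (x : nb_alg N a) y, hol_rel p x y -> om a x = phi y.
  move=> a p x y Hy; rewrite /om.
  case: (constructive_indefinite_description _ _) => y0 [p0 H0] /=.
  exact: wd H0 Hy.
exists om; split; last first.
  move=> x; rewrite (omE _ [::] x x) //; exact: hol_nil.
split.
  move=> a; have [p Hp] := Kconn a o.
  split.
    move=> c x x'.
    have [y Hy] := hol_exists Hp x; have [y' Hy'] := hol_exists Hp x'.
    have Hm := hol_gen (F := fun a u v => c *: u + v) (fun b u v => hol1_lin c u v) Hy Hy'.
    rewrite (omE _ _ _ _ Hm); by rewrite Hl (omE _ _ _ _ Hy) (omE _ _ _ _ Hy').
  split.
    move=> x; have [y Hy] := hol_exists Hp x.
    have Hs := hol_gen (F := fun a u v => cs_star u) (fun b u v => hol1_star u) Hy Hy.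
    have Hm := hol_gen (F := fun a u v => u * v) (fun b u v => hol1_mul u v) Hs Hy.
    rewrite (omE _ _ _ _ Hm); exact: Hpos.
  have [y Hy] := hol_exists Hp (1 : nb_alg N a).
  have Hm := hol_gen (F := fun a u v => 1) (fun b u v => hol1_one N b) Hy Hy.
  by rewrite (omE _ _ _ _ Hm).
move=> a e h x.
have [p Hp] := Kconn a o.
have [y Hy] := hol_exists Hp x.
rewrite (omE _ _ _ _ Hy).
pose b := @Simplex1 _ _ a e e h (lexx e).
have E : @hol1 _ _ _ N b (nb_j N h x) = x.
  rewrite /hol1.
  change (nb_jinv N h (nb_j N (lexx e) (nb_j N h x)) = x).
  rewrite (nb_comp h (lexx e) h).
  have [_ _ _ _ [fK gK]] := nb_iso N h.
  exact: fK.
have Hb : hol_rel (b :: p) (nb_j N h x) y.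
  apply: (@hol_cons _ _ _ N b); rewrite E; exact: Hy.
by rewrite (omE _ _ _ _ Hb).
Qed.
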